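(* Let $(\mathcal{A},\{\mu_n\}_{n\ge1})$ be an $A_\infty$-algebra and $\mathcal{N}:\mathcal{A}\to\mathcal{A}$ a strict homotopy Nijenhuis operator on it. For homogeneous $a_1,\dots,a_n$ and $S\subseteq\{1,\dots,n\}$ write $\mu_n^S(a_1,\dots,a_n)=\mu_n(c_1,\dots,c_n)$ with $c_i=a_i$ for $i\in S$ and $c_i=\mathcal{N}(a_i)$ for $i\notin S$. Define $\eta_n$ by $\eta_n([r];a_1,\dots,a_n)=\mu_n^{\{r\}}(a_1,\dots,a_n)$ for $1\le r\le n$, and, for $n\ge2$, $\eta_n([n+1];a_1,\dots,a_n)=\sum_{k=2}^n(-1)^{k-1}\mathcal{N}^{k-1}\big(\sum_{|S|=k}\mu_n^S(a_1,\dots,a_n)\big)$. Then $(\mathcal{A},\{\eta_n\}_{n\ge1})$ is an $NS_\infty$-algebra. As a consequence, $(\mathcal{A},\{\mu_{n,\mathcal{N}}\}_{n\ge1})$ is an $A_\infty$-algebra, where $\mu_{1,\mathcal{N}}=\mu_1$ and, for $n\ge2$, $\mu_{n,\mathcal{N}}(a_1,\dots,a_n)=\sum_{k=1}^n(-1)^{k-1}\mathcal{N}^{k-1}\big(\sum_{|S|=k}\mu_n^S(a_1,\dots,a_n)\big)$.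
   Context: Over a field of characteristic $0$. An $A_\infty$-algebra: graded vector space $\mathcal{A}$ with degree $n-2$ maps $\mu_n:\mathcal{A}^{\otimes n}\to\mathcal{A}$ such that for all $k\ge1$ and homogeneous $a_1,\dots,a_k$: $\sum_{m+n=k+1}\sum_{i=1}^m(-1)^{i(n+1)+n(|a_1|+\cdots+|a_{i-1}|)}\mu_m(a_1,\dots,a_{i-1},\mu_n(a_i,\dots,a_{i+n-1}),a_{i+n},\dots,a_k)=0$. A strict homotopy Nijenhuis operator is a degree $0$ linear $\mathcal{N}$ with $\mu_n(\mathcal{N}a_1,\dots,\mathcal{N}a_n)=\sum_{k=1}^n(-1)^{k-1}\mathcal{N}^k\big(\sum_{|S|=k}\mu_n^S(a_1,\dots,a_n)\big)$ for all $n\ge1$ and homogeneous $a_i$ (notation $\mu_n^S$ as in the claim). $NS_\infty$-algebras: let $C_n=\{[1],\dots,[n]\}$. $\mathcal{O}(1)=\mathrm{Hom}(\mathbf{k}[C_1]\otimes\mathcal{A},\mathcal{A})$, $\mathcal{O}(n)=\mathrm{Hom}(\mathbf{k}[C_{n+1}]\otimes\mathcal{A}^{\otimes n},\mathcal{A})$ ($n\ge2$); $C_1$, resp. $C_{n+1}$, is the index set of $\mathcal{O}(n)$. For $g\in\mathcal{O}(n)$, $g([*];-)$ is the sum of $g([j];-)$ over its index set and $g([j];-)=0$ for $[j]$ outside it. For $f\in\mathcal{O}(m)$, $g\in\mathcal{O}(n)$ (degrees $m-2$, $n-2$), $1\le i\le m$, homogeneous $a_1,\dots,a_{m+n-1}$,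 with $\varepsilon=(-1)^{n(|a_1|+\cdots+|a_{i-1}|)}$ and $\bar g_*=g([*];a_i,\dots,a_{i+n-1})$, $f\circ_ig\in\mathcal{O}(m+n-1)$ is $\varepsilon$ times: $f([r];a_1,\dots,a_{i-1},\bar g_*,a_{i+n},\dots)$ if $1\le r\le i-1$; $f([i];\dots,g([r-i+1];a_i,\dots,a_{i+n-1}),\dots)$ if $i\le r\le i+n-1$; $f([r-n+1];\dots,\bar g_*,\dots)$ if $i+n\le r\le m+n-1$; $f([i];\dots,g([n+1];a_i,\dots),\dots)+f([m+1];\dots,\bar g_*,\dots)$ if $r=m+n$. An $NS_\infty$-algebra is $(\mathcal{A},\{\eta_n\})$, $\eta_n\in\mathcal{O}(n)$ of degree $n-2$, with $\sum_{m+n=k+1}\sum_{i=1}^m(-1)^{i(n+1)}(\eta_m\circ_i\eta_n)([r];a_1,\dots,a_k)=0$ for all $k\ge1$, all $[r]$ in the index set of $\mathcal{O}(k)$, and homogeneous $a_i$. *)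

(* Defs.v *)
From HB Require Import structures.
From mathcomp Require Import all_boot all_order all_algebra.
Set Implicit Arguments. Unset Strict Implicit. Unset Printing Implicit Defensive.
Import Order.TTheory GRing.Theory Num.Theory.
Local Open Scope ring_scope.

Section Ainf.
Variables (K : fieldType) (V : lmodType K).

(* Grading: V = (+)_{d : int} A d, each A d a subspace, the sum being direct. *)
Definition graded (A : int -> {pred V}) : Prop :=
  [/\ (forall d, 0 \in A d /\
         forall (a : K) x y, x \in A d -> y \in A d -> a *: x + y \in A d),
      (forall (ds : seq int) (vs : seq V), uniq ds -> size vs = size ds ->
         (forall i, (i < size ds)%N -> nth 0 vs i \in A (nth 0%R ds i)) ->
         \sum_(v <- vs) v = 0 -> forall v, v \in vs -> v = 0) &
      (forall v : V, exists (ds : seq int) (vs : seq V), [/\ size vs = size ds,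
         (forall i, (i < size ds)%N -> nth 0 vs i \in A (nth 0%R ds i)) &
         v = \sum_(x <- vs) x])].

Definition homog (A : int -> {pred V}) (s : seq V) (ds : seq int) : Prop :=
  size s = size ds /\ forall i, (i < size s)%N -> nth 0 s i \in A (nth 0%R ds i).

Definition multilinear (n : nat) (f : seq V -> V) : Prop :=
  forall (s : seq V) (i : nat) (a : K) (x y : V), size s = n -> (i < n)%N ->
    f (set_nth 0 s i (a *: x + y)) = a *: f (set_nth 0 s i x) + f (set_nth 0 s i y).

Definition has_degree (A : int -> {pred V}) (n : nat) (e : int) (f : seq V -> V) :=
  forall (s : seq V) (ds : seq int), size s = n -> homog A s ds ->
    f s \in A (\sum_(d <- ds) d + e).

Definition sgn (z : int) : K := (-1) ^+ `|z|%N.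

Definition dsum (ds : seq int) (j : nat) : int := \sum_(d <- take j ds) d.

(* the list a_1..a_{i-1}, x, a_{i+n}, ... (i is 1-based) *)
Definition ins (s : seq V) (i n : nat) (x : V) : seq V :=
  take i.-1 s ++ x :: drop (i.-1 + n) s.
Definition mid (s : seq V) (i n : nat) : seq V := take n (drop i.-1 s).

Definition Ainf (A : int -> {pred V}) (mu : nat -> seq V -> V) : Prop :=
  [/\ forall n, (1 <= n)%N -> multilinear n (mu n),
      forall n, (1 <= n)%N -> has_degree A n (n%:Z - 2) (mu n) &
      forall (k : nat) (s : seq V) (ds : seq int), (1 <= k)%N -> size s = k ->
        homog A s ds ->
        \sum_(1 <= n < k.+1) \sum_(1 <= i < (k.+1 - n).+1)
           sgn ((i * n.+1)%N%:Z + n%:Z * dsum ds i.-1) *: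
           mu (k.+1 - n)%N (ins s i n (mu n (mid s i n))) = 0].

Variable (N : V -> V).

(* mu_n^S(a_1..a_n) with S a subset of {0..n-1} (0-based positions) *)
Definition muS (mu : nat -> seq V -> V) (n : nat) (S : {set 'I_n}) (s : seq V) : V :=
  mu n [seq (if i \in S then nth 0 s i else N (nth 0 s i)) | i <- enum 'I_n].

Definition sumS (mu : nat -> seq V -> V) (n k : nat) (s : seq V) : V :=
  \sum_(S : {set 'I_n} | #|S| == k) muS mu S s.

Definition strict_homotopy_Nijenhuis (A : int -> {pred V}) (mu : nat -> seq V -> V) : Prop :=
  [/\ linear N, (forall d x, x \in A d -> N x \in A d) &
      forall (n : nat) (s : seq V) (ds : seq int), (1 <= n)%N -> size s = n ->
        homog A s ds ->
        mu n (map N s) = \sum_(1 <= k < n.+1) sgn (k.-1) *: iter k N (sumS mu n k s)].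

(* eta_n([r]; a_1..a_n), r 1-based *)
Definition etaN (mu : nat -> seq V -> V) (n r : nat) (s : seq V) : V :=
  if (1 <= r <= n)%N then muS mu [set i : 'I_n | val i == r.-1] s
  else if (2 <= n)%N && (r == n.+1) then
    \sum_(2 <= k < n.+1) sgn (k.-1) *: iter k.-1 N (sumS mu n k s)
  else 0.

Definition muN (mu : nat -> seq V -> V) (n : nat) (s : seq V) : V :=
  if n == 1%N then mu 1%N s
  else \sum_(1 <= k < n.+1) sgn (k.-1) *: iter k.-1 N (sumS mu n k s).

End Ainf.

Section NSinf.
Variables (K : fieldType) (V : lmodType K).

(* size of the index set of O(n): C_1 for n = 1, C_{n+1} for n >= 2 *)
Definition nidx (n : nat) : nat := if n == 1%N then 1%N else n.+1.

Definition gv (eta : nat -> nat -> seq V -> V) (n r : nat) (s : seq V) : V :=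
  if (1 <= r <= nidx n)%N then eta n r s else 0.

Definition gstar (eta : nat -> nat -> seq V -> V) (n : nat) (s : seq V) : V :=
  \sum_(1 <= r < (nidx n).+1) eta n r s.

(* (eta_m o_i eta_n)([r]; a_1..a_{m+n-1}), ds the degrees *)
Definition compi (eta : nat -> nat -> seq V -> V) (m n i r : nat)
    (s : seq V) (ds : seq int) : V :=
  let f := gv eta m in
  let gs := gstar eta n (mid s i n) in
  sgn K (n%:Z * dsum ds i.-1) *:
  (if (r <= i.-1)%N then f r (ins s i n gs)
   else if (r <= i + n - 1)%N then f i (ins s i n (gv eta n (r - i + 1) (mid s i n)))
   else if (r <= m + n - 1)%N then f (r - n + 1)%N (ins s i n gs)
   else if r == (m + n)%N then
     f i (ins s i n (gv eta n n.+1 (mid s i n))) + f m.+1 (ins s i n gs)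
   else 0).

Definition NSinf (A : int -> {pred V}) (eta : nat -> nat -> seq V -> V) : Prop :=
  [/\ forall n r, (1 <= n)%N -> (1 <= r <= nidx n)%N -> multilinear n (eta n r),
      forall n r, (1 <= n)%N -> (1 <= r <= nidx n)%N -> has_degree A n (n%:Z - 2) (eta n r) &
      forall (k r : nat) (s : seq V) (ds : seq int), (1 <= k)%N -> (1 <= r <= nidx k)%N ->
        size s = k -> homog A s ds ->
        \sum_(1 <= n < k.+1) \sum_(1 <= i < (k.+1 - n).+1)
           sgn K ((i * n.+1)%N%:Z) *: compi eta (k.+1 - n) n i r s ds = 0].

End NSinf.

(* Main.v *)
Require Import Defs.
From HB Require Import structures.
From mathcomp Require Import all_boot all_order all_algebra zify.
Import Order.TTheory GRing.Theory Num.Theory.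
Local Open Scope ring_scope.
Set Implicit Arguments. Unset Strict Implicit. Unset Printing Implicit Defensive.

Lemma sgnE (K : fieldType) (z : int) : sgn K z = (-1) ^ z.
Proof.
case: z => n //=. rewrite /sgn /= /exprz.
by rewrite -signr_odd invr_sign -signr_odd.
Qed.

Lemma sgnD (K : fieldType) (x y : int) : sgn K (x + y) = sgn K x * sgn K y.
Proof. by rewrite !sgnE exprzDr // unitrN1. Qed.

Fixpoint allpat (n : nat) : seq (seq bool) :=
  if n is n'.+1 then [seq true :: b | b <- allpat n'] ++ [seq false :: b | b <- allpat n']
  else [:: [::]].

Definition cnt (b : seq bool) := count id b.

Lemma mem_cons_map (x y : bool) b l :
  (x :: b \in [seq y :: b' | b' <- l]) = (x == y) && (b \in l).
Proof.
apply/mapP/andP => [[b' Hb' [-> ->]]|[/eqP -> Hb]]; first by [].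
by exists b.
Qed.

Lemma nil_cons_map (y : bool) l : ([::] \in [seq y :: b' | b' <- l]) = false.
Proof. by apply/mapP => -[]. Qed.

Lemma mem_allpat n b : (b \in allpat n) = (size b == n).
Proof.
elim: n b => [|n IH] [|c b] /=; rewrite ?inE ?mem_cat ?nil_cons_map ?mem_cons_map ?IH ?eqSS //.
by destruct c; rewrite /= ?andbT ?andbF ?orbF.
Qed.

Lemma allpat_size n b : b \in allpat n -> size b = n.
Proof. by rewrite mem_allpat => /eqP. Qed.

Lemma allpat_uniq n : uniq (allpat n).
Proof.
elim: n => [|n IH] //=.
rewrite cat_uniq !map_inj_uniq; try by move=> ? ? [].
rewrite IH /= andbT; apply/hasPn => x /mapP [b _ ->].
by rewrite mem_cons_map.
Qed.

Section Sums.
Variable (W : nmodType).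

Lemma sumpat_cons n (F : seq bool -> W) :
  \sum_(b <- allpat n.+1) F b =
  \sum_(b <- allpat n) F (true :: b) + \sum_(b <- allpat n) F (false :: b).
Proof. by rewrite /= big_cat !big_map. Qed.

Lemma sumpat_cat p q (F : seq bool -> W) :
  \sum_(b <- allpat (p + q)) F b =
  \sum_(b1 <- allpat p) \sum_(b2 <- allpat q) F (b1 ++ b2).
Proof.
elim: p F => [|p IH] F; first by rewrite big_seq1.
by rewrite addSn !sumpat_cons !IH.
Qed.

Lemma sumpat0 n (F : seq bool -> W) :
  \sum_(b <- allpat n) (if cnt b == 0%N then F b else 0) = F (nseq n false).
Proof.
elim: n F => [|n IH] F; first by rewrite big_seq1.
rewrite sumpat_cons big1 ?add0r; first exact: (IH (fun b => F (false :: b))).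
by [].
Qed.

Lemma sum_nat_pick (lo hi c : nat) (X : nat -> W) :
  \sum_(lo <= k < hi) (if c == k then X k else 0) =
  if (lo <= c < hi)%N then X c else 0.
Proof.
case: ifP => [/andP[h1 h2]|h].
  have h3 : (c <= hi)%N by apply: ltnW.
  rewrite (big_cat_nat h1 h3) /= [X in _ + X]big_ltn // eqxx.
  rewrite [X in X + _]big1_seq ?add0r; last first.
    move=> k /andP[_]; rewrite mem_index_iota => /andP[_ hk].
    by case: eqP => // E; move: hk; rewrite E ltnn.
  rewrite big1_seq ?addr0 // => k /andP[_]; rewrite mem_index_iota => /andP[hk _].
  by case: eqP => // E; move: hk; rewrite E ltnn.
rewrite big1_seq // => k /andP[_]; rewrite mem_index_iota => hk.
by case: eqP => // E; move: h; rewrite E hk.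
Qed.

End Sums.

Lemma sgnn (K : fieldType) (n : nat) : sgn K n%:Z = (-1) ^+ n.
Proof. by []. Qed.

Definition ev (n r : nat) : seq bool := nseq r.-1 false ++ true :: nseq (n - r) false.

Lemma size_ev n r : (1 <= r <= n)%N -> size (ev n r) = n.
Proof. move=> /andP[h1 h2]; rewrite size_cat /= !size_nseq; lia. Qed.

Lemma nth_ev n r j : (1 <= r <= n)%N -> nth false (ev n r) j = (j == r.-1) && (j < n)%N.
Proof.
move=> /andP[h1 h1']; rewrite nth_cat size_nseq; case: ltnP => hj.
  rewrite nth_nseq if_same; symmetry; apply/andP => -[/eqP E _]; lia.
case E: (j - r.-1)%N => [|k] /=.
  have -> : j = r.-1 by lia.
  rewrite eqxx /=; symmetry; apply/idP; lia.
have -> : forall m k, nth false (nseq m false) k = false.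
  by move=> m k'; rewrite nth_nseq if_same.
symmetry; apply/andP => -[/eqP E' h']; lia.
Qed.

Lemma ev_cnt n r : (1 <= r <= n)%N -> cnt (ev n r) = 1%N.
Proof. by move=> _; rewrite /cnt count_cat /= !count_nseq /= !mul0n. Qed.

Lemma sum_ev (W : nmodType) n (G : seq bool -> W) :
  \sum_(1 <= r < n.+1) G (ev n r) =
  \sum_(b <- allpat n) (if cnt b == 1%N then G b else 0).
Proof.
elim: n G => [|n IH] G; first by rewrite big_geq // big_seq1.
rewrite sumpat_cons big_ltn // big_add1 /=.
have -> : \sum_(b <- allpat n) (if cnt (true :: b) == 1%N then G (true :: b) else 0)
  = \sum_(b <- allpat n) (if cnt b == 0%N then G (true :: b) else 0) by [].
rewrite sumpat0 -(IH (fun b => G (false :: b))).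
congr (_ + _); first by rewrite /ev /= subn1.
apply: eq_big_nat => r /andP[hr _].
by rewrite /ev; case: r hr => // r _ /=; rewrite subSS.
Qed.


Section All.
Variables (K : fieldType) (V : lmodType K) (N : V -> V) (A : int -> {pred V}).
Variable (mu : nat -> seq V -> V).
Hypothesis NL : linear N.
Lemma N_lin a x y : N (a *: x + y) = a *: N x + N y.
Proof. exact: NL. Qed.
Lemma N0 : N 0 = 0.
Proof. have h := N_lin 1 0 0; rewrite !scale1r addr0 in h.
by apply: (addrI (N 0)); rewrite addr0 -h. Qed.
Lemma ND x y : N (x + y) = N x + N y.
Proof. by have := N_lin 1 x y; rewrite !scale1r. Qed.
Lemma NZ a x : N (a *: x) = a *: N x.
Proof. by have := N_lin a x 0; rewrite !addr0 N0 addr0. Qed.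

Lemma itD j x y : iter j N (x + y) = iter j N x + iter j N y.
Proof. by elim: j => //= j ->; rewrite ND. Qed.
Lemma itZ j a x : iter j N (a *: x) = a *: iter j N x.
Proof. by elim: j => //= j ->; rewrite NZ. Qed.
Lemma it0 j : iter j N 0 = 0.
Proof. by elim: j => //= j ->; rewrite N0. Qed.
Lemma it_sum j I (r : seq I) (P : pred I) (F : I -> V) :
  iter j N (\sum_(i <- r | P i) F i) = \sum_(i <- r | P i) iter j N (F i).
Proof. exact: (big_morph _ (itD j) (it0 j)). Qed.

Definition pat (b : seq bool) (s : seq V) : seq V :=
  [seq (if p.1 then p.2 else N p.2) | p <- zip b s].

Definition pS n (S : {set 'I_n}) : seq bool := [seq i \in S | i <- enum 'I_n].

Lemma size_pat b s : size (pat b s) = minn (size b) (size s).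
Proof. by rewrite size_map size_zip. Qed.

Lemma nth_pat b s j : (j < size b)%N -> (j < size s)%N ->
  nth 0 (pat b s) j = if nth false b j then nth 0 s j else N (nth 0 s j).
Proof.
move=> h1 h2; rewrite (nth_map (false, 0)) ?size_zip ?leq_min ?h1 ?h2 //.
by rewrite nth_zip_cond size_zip leq_min h1 h2.
Qed.

Lemma pat_cat b1 b2 s1 s2 : size b1 = size s1 ->
  pat (b1 ++ b2) (s1 ++ s2) = pat b1 s1 ++ pat b2 s2.
Proof. by move=> h; rewrite /pat zip_cat // map_cat. Qed.

Lemma pat_nseq n s : size s = n -> pat (nseq n false) s = map N s.
Proof. by move=> <-; rewrite /pat; elim: s => //= x s ->. Qed.

Lemma enum_nth n (s : seq V) : size s = n -> s = [seq nth 0 s (val i) | i <- enum 'I_n].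
Proof.
move=> hs; rewrite (map_comp (nth 0 s) val) val_enum_ord.
by rewrite -hs -/(mkseq _ _) mkseq_nth.
Qed.

Lemma muS_pat n (S : {set 'I_n}) s : size s = n ->
  muS N mu S s = mu n (pat (pS S) s).
Proof.
move=> hs; rewrite /muS /pat /pS; congr (mu n _).
rewrite [X in zip _ X](enum_nth hs) zip_map -map_comp.
by apply: eq_map => i.
Qed.

Lemma card_pS n (S : {set 'I_n}) : #|S| = cnt (pS S).
Proof.
rewrite /cnt /pS count_map cardE /enum_mem size_filter.
rewrite -[X in _ = count _ X]/(enum 'I_n) enumT.
by apply: eq_count.
Qed.

Lemma pS_inj n : injective (@pS n).
Proof.
move=> S1 S2 h; apply/setP => i.
have := congr1 (fun b => nth false b i) h.
rewrite /pS !(nth_map i) -?enumT ?size_enum_ord ?ltn_ord // ?nth_ord_enum //.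
Qed.

Lemma pS_surj n b : size b = n -> b = pS [set i : 'I_n | nth false b i].
Proof.
move=> hb; apply: (@eq_from_nth _ false); first by rewrite /pS size_map size_enum_ord.
move=> j; rewrite hb => hj.
rewrite /pS (nth_map (Ordinal hj)) ?size_enum_ord //.
have -> : nth (Ordinal hj) (enum 'I_n) j = Ordinal hj.
  exact: (nth_ord_enum (Ordinal hj) (Ordinal hj)).
by rewrite inE.
Qed.

Lemma sum_sets n (G : seq bool -> V) :
  \sum_(S : {set 'I_n}) G (pS S) = \sum_(b <- allpat n) G b.
Proof.
rewrite -(big_map (@pS n) xpredT G).
apply: perm_big; apply: uniq_perm.
- by rewrite map_inj_uniq ?index_enum_uniq //; exact: pS_inj.
- exact: allpat_uniq.
move=> b; rewrite mem_allpat; apply/mapP/eqP => [[S _ ->]|hb].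
  by rewrite /pS size_map size_enum_ord.
by exists [set i : 'I_n | nth false b i]; rewrite ?mem_index_enum // -pS_surj.
Qed.

Lemma sumS_pat n k s : size s = n ->
  sumS N mu n k s = \sum_(b <- allpat n) (if cnt b == k then mu n (pat b s) else 0).
Proof.
move=> hs; rewrite /sumS big_mkcond /=.
under eq_bigr => S _ do rewrite muS_pat // card_pS.
exact: (@sum_sets n (fun b => if cnt b == k then mu n (pat b s) else 0)).
Qed.

Lemma sumk_pat n lo (c : nat -> K) (e : nat -> nat) s : size s = n ->
  \sum_(lo <= k < n.+1) c k *: iter (e k) N (sumS N mu n k s) =
  \sum_(b <- allpat n) (if (lo <= cnt b)%N then c (cnt b) *: iter (e (cnt b)) N (mu n (pat b s)) else 0).
Proof.
move=> hs.
under eq_bigr => k _ do rewrite sumS_pat // it_sum scaler_sumr.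
rewrite exchange_big /=; apply: eq_big_seq => b hb.
have -> : \sum_(lo <= k < n.+1) c k *: iter (e k) N (if cnt b == k then mu n (pat b s) else 0)
   = \sum_(lo <= k < n.+1) (if cnt b == k then c k *: iter (e k) N (mu n (pat b s)) else 0).
  by apply: eq_bigr => k _; case: eqP => // _; rewrite it0 scaler0.
rewrite sum_nat_pick; have : (cnt b < n.+1)%N.
  by rewrite ltnS -(allpat_size hb) /cnt count_size.
by move=> ->; rewrite andbT.
Qed.

Lemma size_ins (s : seq V) i n y : (i.-1 + n <= size s)%N ->
  size (ins s i n y) = (size s - n).+1.
Proof. move=> h; rewrite /ins size_cat /= size_take size_drop; case: ltnP; lia. Qed.

Lemma size_mid (s : seq V) i n : (i.-1 + n <= size s)%N -> size (mid s i n) = n.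
Proof. move=> h; rewrite /mid size_take size_drop; case: ltnP; lia. Qed.



Lemma nth_ins (s : seq V) i n y p : (i.-1 + n <= size s)%N ->
  nth 0 (ins s i n y) p =
  if (p < i.-1)%N then nth 0 s p else if p == i.-1 then y else nth 0 s (p + n - 1).
Proof.
move=> h; rewrite /ins nth_cat size_take.
have -> : (if (i.-1 < size s)%N then i.-1 else size s) = i.-1 by case: ltnP; lia.
case: ltnP => h1; first by rewrite nth_take.
case E: (p - i.-1)%N => [|q] /=.
  by have -> : p == i.-1 by apply/eqP; lia.
have -> : (p == i.-1) = false by apply/eqP; lia.
by rewrite nth_drop; congr nth; lia.
Qed.

Lemma nth_mid (s : seq V) i n p : (p < n)%N ->
  nth 0 (mid s i n) p = nth 0 s (i.-1 + p).
Proof. by move=> h; rewrite /mid nth_take // nth_drop. Qed.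

Lemma split3 (s : seq V) i n : s = take i.-1 s ++ mid s i n ++ drop (i.-1 + n) s.
Proof. by rewrite /mid addnC -drop_drop !cat_take_drop. Qed.

Lemma pat_ins3 (s : seq V) i n t1 u t3 x : size t1 = i.-1 -> size u = n ->
  (i.-1 + n <= size s)%N ->
  ins (pat (t1 ++ u ++ t3) s) i n x =
  pat t1 (take i.-1 s) ++ x :: pat t3 (drop (i.-1 + n) s).
Proof.
move=> h1 h2 h3; rewrite {1}(split3 s i n) pat_cat; last first.
  by rewrite size_take; case: ltnP; lia.
rewrite pat_cat; last by rewrite size_mid.
have e1 : size (pat t1 (take i.-1 s)) = i.-1.
  by rewrite size_pat size_take h1; case: ltnP; lia.
have e2 : size (pat u (mid s i n)) = n by rewrite size_pat size_mid // h2 minnn.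
have e3 : size (pat t1 (take i.-1 s) ++ pat u (mid s i n)) = (i.-1 + n)%N by rewrite size_cat e1 e2.
by rewrite /ins (take_size_cat _ e1) catA (drop_size_cat _ e3).
Qed.

Lemma pat_mid3 (s : seq V) i n t1 u t3 : size t1 = i.-1 -> size u = n ->
  (i.-1 + n <= size s)%N ->
  mid (pat (t1 ++ u ++ t3) s) i n = pat u (mid s i n).
Proof.
move=> h1 h2 h3; rewrite {1}(split3 s i n) pat_cat; last first.
  by rewrite size_take; case: ltnP; lia.
rewrite pat_cat; last by rewrite size_mid.
have e1 : size (pat t1 (take i.-1 s)) = i.-1.
  by rewrite size_pat size_take h1; case: ltnP; lia.
have e2 : size (pat u (mid s i n)) = n by rewrite size_pat size_mid // h2 minnn.
by rewrite /mid (drop_size_cat _ e1) (take_size_cat _ e2).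
Qed.

Lemma pat_ins1 (s : seq V) i n t1 (c : bool) t3 y : size t1 = i.-1 ->
  (i.-1 + n <= size s)%N ->
  pat (t1 ++ c :: t3) (ins s i n y) =
  pat t1 (take i.-1 s) ++ (if c then y else N y) :: pat t3 (drop (i.-1 + n) s).
Proof.
move=> h1 h3; rewrite /ins pat_cat //.
by rewrite size_take h1; case: ltnP; lia.
Qed.

Lemma pat_set_nth b (s : seq V) p z : size b = size s -> (p < size s)%N ->
  pat b (set_nth 0 s p z) = set_nth 0 (pat b s) p (if nth false b p then z else N z).
Proof.
move=> hb hp; apply: (@eq_from_nth _ 0).
  by rewrite size_pat !size_set_nth size_pat; lia.
move=> q; rewrite size_pat size_set_nth => hq.
have hq' : (q < size s)%N by lia.
rewrite nth_pat ?size_set_nth ?hb //; try lia.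
rewrite !nth_set_nth /= nth_pat ?hb //.
by case: eqP => // ->.
Qed.

Lemma homog_cat s1 s2 d1 d2 : homog A s1 d1 -> homog A s2 d2 -> homog A (s1 ++ s2) (d1 ++ d2).
Proof.
move=> [e1 h1] [e2 h2]; split; first by rewrite !size_cat e1 e2.
move=> p; rewrite size_cat nth_cat e1 => hp; rewrite nth_cat -e1.
case: ltnP => hp1; first exact: h1.
apply: h2; lia.
Qed.

Lemma homog_take s ds p : homog A s ds -> homog A (take p s) (take p ds).
Proof.
move=> [e h]; split; first by rewrite !size_take e.
move=> q; rewrite size_take => hq; rewrite !nth_take; first apply: h.
- by move: hq; case: (ltnP p (size s)); lia.
- by move: hq; case: (ltnP p (size s)); lia.
- by move: hq; case: (ltnP p (size s)); lia.
Qed.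

Lemma homog_drop s ds p : homog A s ds -> homog A (drop p s) (drop p ds).
Proof.
move=> [e h]; split; first by rewrite !size_drop e.
move=> q; rewrite size_drop => hq; rewrite !nth_drop; apply: h; lia.
Qed.

Lemma homog_cons x d s ds : x \in A d -> homog A s ds -> homog A (x :: s) (d :: ds).
Proof.
move=> hx [e h]; split; first by rewrite /= e.
by move=> [|q] //= hq; apply: h.
Qed.

Lemma homog_ins s ds i n y d : homog A s ds -> y \in A d ->
  homog A (ins s i n y) (take i.-1 ds ++ d :: drop (i.-1 + n) ds).
Proof.
move=> h hy; apply: homog_cat; first exact: homog_take.
by apply: homog_cons => //; apply: homog_drop.
Qed.

Lemma homog_mid s ds i n : homog A s ds -> homog A (mid s i n) (take n (drop i.-1 ds)).
Proof. by move=> h; apply: homog_take; apply: homog_drop. Qed.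

Lemma homog_pat b s ds : (forall d x, x \in A d -> N x \in A d) ->
  size b = size s -> homog A s ds -> homog A (pat b s) ds.
Proof.
move=> hN hb [e h]; split; first by rewrite size_pat hb minnn.
move=> q; rewrite size_pat hb minnn => hq; rewrite nth_pat ?hb //.
by case: ifP => _; [apply: h | apply: hN; apply: h].
Qed.

Definition cf (lo : nat) (b : seq bool) (x : V) : V :=
  if (lo <= cnt b)%N then sgn K (cnt b).-1 *: iter (cnt b).-1 N x else 0.

Lemma pS_ev n r : (1 <= r <= n)%N -> pS [set i : 'I_n | val i == r.-1] = ev n r.
Proof.
move=> hr; apply: (@eq_from_nth _ false); first by rewrite /pS size_map size_enum_ord size_ev.
move=> j; rewrite /pS size_map size_enum_ord => hj.
rewrite (nth_map (Ordinal hj)) ?size_enum_ord //.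
have -> : nth (Ordinal hj) (enum 'I_n) j = Ordinal hj.
  exact: (nth_ord_enum (Ordinal hj) (Ordinal hj)).
by rewrite inE nth_ev ?hj ?andbT.
Qed.

Lemma etaN_small n r s : (1 <= r <= n)%N -> size s = n ->
  etaN N mu n r s = mu n (pat (ev n r) s).
Proof. by move=> hr hs; rewrite /etaN hr muS_pat // pS_ev. Qed.

Lemma muN_pat n s : (1 <= n)%N -> size s = n ->
  muN N mu n s = \sum_(b <- allpat n) cf 1 b (mu n (pat b s)).
Proof.
move=> hn hs; rewrite /muN; case: eqP => [n1|n1].
  move: hs; rewrite n1; case: s => [|x [|? ?]] // _.
  by rewrite /= !big_cons big_nil /cf /= scale1r !addr0.
exact: (@sumk_pat n 1 (fun k => sgn K (k.-1)%:Z) predn s hs).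
Qed.

Lemma etaN_top n s : (2 <= n)%N -> size s = n ->
  etaN N mu n n.+1 s = \sum_(b <- allpat n) cf 2 b (mu n (pat b s)).
Proof.
move=> hn hs; rewrite /etaN ltnn andbF hn eqxx /=.
exact: (@sumk_pat n 2 (fun k => sgn K (k.-1)%:Z) predn s hs).
Qed.

Lemma split_cnt (W : nmodType) n (F : seq bool -> W) :
  \sum_(b <- allpat n) F b = F (nseq n false) + \sum_(b <- allpat n) (if (1 <= cnt b)%N then F b else 0).
Proof.
rewrite -sumpat0 -big_split /=; apply: eq_bigr => b _.
by case: (cnt b) => [|c] /=; rewrite ?addr0 ?add0r.
Qed.

Lemma NijP n x dx : strict_homotopy_Nijenhuis N A mu -> (1 <= n)%N -> size x = n ->
  homog A x dx ->
  \sum_(b <- allpat n) sgn K (cnt b) *: iter (cnt b) N (mu n (pat b x)) = 0.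
Proof.
move=> [_ _ H] hn hx hom; have := H n x dx hn hx hom.
rewrite (@sumk_pat n 1 (fun k => sgn K (k.-1)%:Z) id x hx) => E.
rewrite split_cnt /cnt count_nseq mul0n /= scale1r pat_nseq // E.
rewrite -big_split /= big1 // => b _; rewrite /cnt; case: (count id b) => [|c] /=.
  by rewrite addr0.
by rewrite /sgn /= exprS mulN1r scaleNr addrN.
Qed.

Lemma N_muN n x dx : strict_homotopy_Nijenhuis N A mu -> (1 <= n)%N -> size x = n ->
  homog A x dx -> N (muN N mu n x) = mu n (map N x).
Proof.
move=> Hn hn hx hom; have := NijP Hn hn hx hom.
rewrite split_cnt /cnt count_nseq mul0n /= scale1r pat_nseq // => E.
rewrite muN_pat // (big_morph N ND N0).
rewrite (eq_bigr (fun b => - (if (1 <= cnt b)%N then sgn K (cnt b) *: iter (cnt b) N (mu n (pat b x)) else 0))); last first.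
  move=> b _; rewrite /cf /cnt; case: (count id b) => [|c] /=; first by rewrite N0 ?oppr0.
  by rewrite NZ /sgn /= exprS mulN1r scaleNr opprK.
rewrite sumrN; apply/eqP; rewrite eq_sym -subr_eq0 opprK; apply/eqP; exact: E.
Qed.

Lemma gstar_muN n x : (1 <= n)%N -> size x = n ->
  gstar (etaN N mu) n x = muN N mu n x.
Proof.
move=> hn hx; rewrite /gstar /nidx; case: eqP => [n1|n1].
  rewrite n1 in hx *; rewrite big_nat1 etaN_small // muN_pat // !big_cons big_nil /cf /=.
  by rewrite scale1r !addr0.
have hn2 : (2 <= n)%N by lia.
rewrite big_nat_recr //= etaN_top // muN_pat //.
have -> : \sum_(1 <= i < n.+1) etaN N mu n i x = \sum_(1 <= i < n.+1) mu n (pat (ev n i) x).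
  by apply: eq_big_nat => r hr; rewrite etaN_small //; lia.
rewrite (sum_ev n (fun b => mu n (pat b x))) -big_split /=.
apply: eq_bigr => b _; rewrite /cf /cnt; case: (count id b) => [|[|c]] /=.
- by rewrite addr0.
- by rewrite scale1r addr0.
- by rewrite add0r.
Qed.


Hypothesis HNij : strict_homotopy_Nijenhuis N A mu.
Hypothesis Hml : forall n, (1 <= n)%N -> multilinear n (mu n).
Hypothesis Hdeg : forall n, (1 <= n)%N -> has_degree A n (n%:Z - 2) (mu n).
Lemma set_nth_catz (l1 l3 : seq V) z : set_nth 0 (l1 ++ 0 :: l3) (size l1) z = l1 ++ z :: l3.
Proof. by elim: l1 => //= x l1 ->. Qed.

Lemma slot_lin m l1 l3 a x y : size (l1 ++ x :: l3) = m ->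
  mu m (l1 ++ (a *: x + y) :: l3) = a *: mu m (l1 ++ x :: l3) + mu m (l1 ++ y :: l3).
Proof.
move=> hs; have hm : (1 <= m)%N by rewrite -hs size_cat /=; lia.
have := Hml hm (s := l1 ++ 0 :: l3) (i := size l1) a x y.
rewrite !set_nth_catz; apply; first by rewrite -hs !size_cat.
by rewrite -hs size_cat /=; lia.
Qed.

Lemma slot0 m l1 l3 : size (l1 ++ 0 :: l3) = m -> mu m (l1 ++ 0 :: l3) = 0.
Proof.
move=> hs; have := slot_lin 1 0 hs; rewrite !scale1r addr0 => h.
by apply: (addrI (mu m (l1 ++ 0 :: l3))); rewrite addr0 -h.
Qed.

Lemma slotD m l1 l3 x y : size (l1 ++ x :: l3) = m ->
  mu m (l1 ++ (x + y) :: l3) = mu m (l1 ++ x :: l3) + mu m (l1 ++ y :: l3).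
Proof. by move=> hs; have := slot_lin 1 y hs; rewrite !scale1r. Qed.

Lemma slotZ m l1 l3 a x : size (l1 ++ x :: l3) = m ->
  mu m (l1 ++ (a *: x) :: l3) = a *: mu m (l1 ++ x :: l3).
Proof.
move=> hs; have := slot_lin a 0 hs; rewrite addr0 => ->.
by rewrite slot0 ?addr0 // -hs !size_cat.
Qed.

Lemma slot_sum m l1 l3 I (r : seq I) (F : I -> V) : size (l1 ++ 0 :: l3) = m ->
  mu m (l1 ++ (\sum_(b <- r) F b) :: l3) = \sum_(b <- r) mu m (l1 ++ F b :: l3).
Proof.
move=> hs; elim: r => [|c r IH]; first by rewrite !big_nil slot0.
rewrite !big_cons slotD ?IH //.
by rewrite -hs !size_cat.
Qed.


Definition Lf (s : seq V) i n t1 t3 (v : V) :=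
  pat t1 (take i.-1 s) ++ v :: pat t3 (drop (i.-1 + n) s).

Definition Gf m (s : seq V) i n (v : V) :=
  \sum_(t1 <- allpat i.-1) \sum_(t3 <- allpat (m - i))
     sgn K (cnt (t1 ++ t3)) *: iter (cnt (t1 ++ t3)) N (mu m (Lf s i n t1 t3 v)).

Lemma N_sum I (r : seq I) (F : I -> V) : N (\sum_(x <- r) F x) = \sum_(x <- r) N (F x).
Proof. exact: (big_morph N ND N0). Qed.

Lemma cnt_mid t1 (c : bool) t3 : cnt (t1 ++ c :: t3) = (cnt (t1 ++ t3) + c)%N.
Proof. by rewrite /cnt !count_cat /=; lia. Qed.

Lemma cnt_mid3 t1 u t3 : cnt (t1 ++ u ++ t3) = (cnt (t1 ++ t3) + cnt u)%N.
Proof. by rewrite /cnt !count_cat; lia. Qed.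

Lemma Lf_size k s i n t1 t3 v : size s = k -> (1 <= i)%N -> (i.-1 + n <= k)%N ->
  size t1 = i.-1 -> size t3 = (k.+1 - n - i)%N -> size (Lf s i n t1 t3 v) = (k.+1 - n)%N.
Proof.
move=> hs hi hk h1 h3; rewrite /Lf size_cat /= !size_pat size_take size_drop h1 h3 hs.
case: ltnP => ?; lia.
Qed.

Lemma Phi1 k s ds i n v d : size s = k -> homog A s ds -> (1 <= i)%N -> (i.-1 + n <= k)%N ->
  v \in A d -> (forall d x, x \in A d -> N x \in A d) ->
  Gf (k.+1 - n) s i n (N v) = N (Gf (k.+1 - n) s i n v).
Proof.
move=> hs hom hi hk hv hN.
set m := (k.+1 - n)%N.
have hm : (1 <= m)%N by rewrite /m; lia.
have hx : size (ins s i n v) = m by rewrite size_ins hs /m; lia.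
have homx := homog_ins i n hom hv.
have := NijP HNij hm hx homx.
have -> : allpat m = allpat (i.-1 + (m - i).+1) by congr allpat; rewrite /m; lia.
rewrite sumpat_cat.
under eq_bigr => t1 _ do rewrite sumpat_cons.
rewrite big_split /=.
have E1 : \sum_(t1 <- allpat i.-1) \sum_(t3 <- allpat (m - i))
    sgn K (cnt (t1 ++ true :: t3)) *: iter (cnt (t1 ++ true :: t3)) N (mu m (pat (t1 ++ true :: t3) (ins s i n v)))
    = - N (Gf m s i n v).
  rewrite /Gf N_sum -sumrN; apply: eq_big_seq => t1 h1.
  rewrite N_sum -sumrN; apply: eq_big_seq => t3 h3.
  rewrite pat_ins1 ?(allpat_size h1) ?hs //.
  have -> : cnt (t1 ++ true :: t3) = (cnt (t1 ++ t3)).+1 by rewrite /cnt !count_cat /=; lia.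
  by rewrite NZ /Lf sgnn exprS mulN1r scaleNr.
have E2 : \sum_(t1 <- allpat i.-1) \sum_(t3 <- allpat (m - i))
    sgn K (cnt (t1 ++ false :: t3)) *: iter (cnt (t1 ++ false :: t3)) N (mu m (pat (t1 ++ false :: t3) (ins s i n v)))
    = Gf m s i n (N v).
  rewrite /Gf; apply: eq_big_seq => t1 h1; apply: eq_big_seq => t3 h3.
  rewrite pat_ins1 ?(allpat_size h1) ?hs //.
  by have -> : cnt (t1 ++ false :: t3) = cnt (t1 ++ t3) by rewrite /cnt !count_cat.
rewrite E1 E2 => /eqP; rewrite addrC subr_eq0 => /eqP.
done.
Qed.

Lemma NA d x : x \in A d -> N x \in A d.
Proof. by case: HNij => _ h _; apply: h. Qed.

Lemma iterA j d x : x \in A d -> iter j N x \in A d.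
Proof. by move=> h; elim: j => //= j IH; apply: NA. Qed.

Lemma PhiJ k s ds i n v d j : size s = k -> homog A s ds -> (1 <= i)%N -> (i.-1 + n <= k)%N ->
  v \in A d ->
  Gf (k.+1 - n) s i n (iter j N v) = iter j N (Gf (k.+1 - n) s i n v).
Proof.
move=> hs hom hi hk hv; elim: j => //= j IH.
by rewrite (Phi1 hs hom hi hk (iterA j hv) NA) IH.
Qed.

Lemma cf1_true t1 t3 x :
  cf 1 (t1 ++ true :: t3) x = sgn K (cnt (t1 ++ t3)) *: iter (cnt (t1 ++ t3)) N x.
Proof.
rewrite /cf; have -> : cnt (t1 ++ true :: t3) = (cnt (t1 ++ t3)).+1.
  by rewrite /cnt !count_cat /=; lia.
by [].
Qed.

Lemma cf1_false t1 t3 n x :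
  cf 1 (t1 ++ false :: t3) x = cf 1 (t1 ++ nseq n false ++ t3) x.
Proof.
rewrite /cf; have -> : cnt (t1 ++ false :: t3) = cnt (t1 ++ nseq n false ++ t3).
  by rewrite /cnt !count_cat /= count_nseq; lia.
by [].
Qed.

Lemma cf_split t1 u t3 x : (1 <= cnt u)%N ->
  cf 1 (t1 ++ u ++ t3) x =
  sgn K (cnt u).-1 *: iter (cnt u).-1 N (sgn K (cnt (t1 ++ t3)) *: iter (cnt (t1 ++ t3)) N x).
Proof.
move=> hu; rewrite /cf.
have -> : cnt (t1 ++ u ++ t3) = ((cnt u).-1 + cnt (t1 ++ t3)).+1.
  by rewrite /cnt !count_cat /= -/(cnt u); lia.
rewrite /= itZ iterD scalerA !sgnn -exprD.
by [].
Qed.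

Lemma shape k s ds i n : size s = k -> homog A s ds -> (1 <= i)%N -> (1 <= n)%N ->
  (i.-1 + n <= k)%N ->
  muN N mu (k.+1 - n) (ins s i n (muN N mu n (mid s i n))) =
  \sum_(b <- allpat k) cf 1 b (mu (k.+1 - n) (ins (pat b s) i n (mu n (mid (pat b s) i n)))).
Proof.
move=> hs hom hi hn hk.
set m := (k.+1 - n)%N; set sm := mid s i n; set y := muN N mu n sm.
have hm : (1 <= m)%N by rewrite /m; lia.
have hsm : size sm = n by rewrite size_mid ?hs.
have homsm : homog A sm (take n (drop i.-1 ds)) by apply: homog_mid.
have hy : size (ins s i n y) = m by rewrite size_ins hs /m; lia.
have hLf : forall t1 t3 v, t1 \in allpat i.-1 -> t3 \in allpat (m - i) ->
    size (Lf s i n t1 t3 v) = m.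
  move=> t1 t3 v h1 h3; apply: Lf_size => //; first exact: allpat_size h1.
  by rewrite (allpat_size h3).
rewrite muN_pat //.
have -> : allpat m = allpat (i.-1 + (m - i).+1) by congr allpat; rewrite /m; lia.
rewrite sumpat_cat.
under eq_bigr => t1 _ do rewrite sumpat_cons.
rewrite big_split /=.
have -> : allpat k = allpat (i.-1 + (n + (m - i))) by congr allpat; rewrite /m; lia.
rewrite sumpat_cat.
have ER : \sum_(t1 <- allpat i.-1) \sum_(b2 <- allpat (n + (m - i)))
   cf 1 (t1 ++ b2) (mu m (ins (pat (t1 ++ b2) s) i n (mu n (mid (pat (t1 ++ b2) s) i n))))
 = \sum_(t1 <- allpat i.-1) \sum_(t3 <- allpat (m - i))
   cf 1 (t1 ++ nseq n false ++ t3) (mu m (Lf s i n t1 t3 (mu n (pat (nseq n false) sm))))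
    + \sum_(t1 <- allpat i.-1) \sum_(t3 <- allpat (m - i)) \sum_(u <- allpat n) (if (1 <= cnt u)%N then
         cf 1 (t1 ++ u ++ t3) (mu m (Lf s i n t1 t3 (mu n (pat u sm)))) else 0).
  rewrite -big_split; apply: eq_big_seq => t1 h1; rewrite sumpat_cat exchange_big -big_split /=; apply: eq_big_seq => t3 h3.
  rewrite split_cnt; congr (_ + _).
    by rewrite pat_ins3 ?(allpat_size h1) ?size_nseq ?hs // pat_mid3 ?(allpat_size h1) ?size_nseq ?hs.
  apply: eq_big_seq => u hu; case: ifP => // _.
  by rewrite pat_ins3 ?(allpat_size h1) ?(allpat_size hu) ?hs // pat_mid3 ?(allpat_size h1) ?(allpat_size hu) ?hs.
rewrite ER; clear ER.
rewrite addrC; congr (_ + _).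
  apply: eq_big_seq => t1 h1; apply: eq_big_seq => t3 h3.
  rewrite (cf1_false _ _ n) (pat_nseq hsm) -(N_muN HNij hn hsm homsm) -/y.
  by rewrite pat_ins1 ?(allpat_size h1) ?hs.
have EX : forall (F : seq bool -> seq bool -> seq bool -> V),
   \sum_(t1 <- allpat i.-1) \sum_(t3 <- allpat (m - i)) \sum_(u <- allpat n) F t1 t3 u =
   \sum_(u <- allpat n) \sum_(t1 <- allpat i.-1) \sum_(t3 <- allpat (m - i)) F t1 t3 u.
  move=> F; under eq_bigr => a _ do rewrite exchange_big.
  by rewrite exchange_big.
transitivity (\sum_(u <- allpat n) (if (1 <= cnt u)%N then
    sgn K (cnt u).-1 *: iter (cnt u).-1 N (Gf m s i n (mu n (pat u sm))) else 0)); last first.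
  rewrite EX; apply: eq_big_seq => u hu; case: ifP => hcu; last by rewrite !big1.
  rewrite /Gf it_sum scaler_sumr; apply: eq_big_seq => t1 h1.
  rewrite it_sum scaler_sumr; apply: eq_big_seq => t3 h3.
  by rewrite cf_split.
have E1 : forall t1 t3, t1 \in allpat i.-1 -> t3 \in allpat (m - i) ->
    cf 1 (t1 ++ true :: t3) (mu m (pat (t1 ++ true :: t3) (ins s i n y))) =
    \sum_(u <- allpat n) sgn K (cnt (t1 ++ t3)) *: iter (cnt (t1 ++ t3)) N
        (mu m (Lf s i n t1 t3 (cf 1 u (mu n (pat u sm))))).
  move=> t1 t3 h1 h3.
  rewrite cf1_true pat_ins1 ?(allpat_size h1) ?hs //.
  rewrite /y (muN_pat hn hsm) -/(Lf s i n t1 t3 _).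
  rewrite /Lf slot_sum; last by have := hLf t1 t3 0 h1 h3; rewrite /Lf.
  by rewrite it_sum scaler_sumr.
rewrite (eq_big_seq _ (fun t1 h1 => eq_big_seq _ (fun t3 h3 => E1 t1 t3 h1 h3))).
rewrite EX; apply: eq_big_seq => u hu; case: ifP => hcu.
  rewrite -(PhiJ _ hs hom hi hk (Hdeg hn (s := pat u sm) (ds := take n (drop i.-1 ds)) _ _)); last first.
  - by apply: homog_pat => //; [exact: NA | rewrite (allpat_size hu) hsm].
  - by rewrite size_pat (allpat_size hu) hsm minnn.
  rewrite /Gf scaler_sumr; apply: eq_big_seq => t1 h1.
  rewrite scaler_sumr; apply: eq_big_seq => t3 h3.
  rewrite /cf hcu /Lf slotZ; last by have := hLf t1 t3 (iter (cnt u).-1 N (mu n (pat u sm))) h1 h3; rewrite /Lf.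
  by rewrite itZ !scalerA mulrC.
rewrite big1_seq // => t1 /andP[_ h1]; rewrite big1_seq // => t3 /andP[_ h3].
rewrite /cf hcu /Lf slot0 ?it0 ?scaler0 //.
by have := hLf t1 t3 0 h1 h3; rewrite /Lf.
Qed.


Hypothesis Hgr : graded A.
Hypothesis HA : Ainf A mu.

Lemma A0 d : 0 \in A d.
Proof. by case: Hgr => h _ _; case: (h d). Qed.
Lemma Alin d a x y : x \in A d -> y \in A d -> a *: x + y \in A d.
Proof. by case: Hgr => h _ _; case: (h d) => _; apply. Qed.
Lemma AD d x y : x \in A d -> y \in A d -> x + y \in A d.
Proof. by move=> hx hy; have := Alin 1 hx hy; rewrite scale1r. Qed.
Lemma AZ d a x : x \in A d -> a *: x \in A d.
Proof. by move=> hx; have := Alin a hx (A0 d); rewrite addr0. Qed.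
Lemma Asum d (I : eqType) (r : seq I) (F : I -> V) : (forall b, b \in r -> F b \in A d) ->
  \sum_(b <- r) F b \in A d.
Proof.
elim: r => [|c r IH] h; first by rewrite big_nil A0.
rewrite big_cons; apply: AD; first by apply: h; rewrite mem_head.
by apply: IH => b hb; apply: h; rewrite inE hb orbT.
Qed.

Lemma cf_lin lo b a x y : cf lo b (a *: x + y) = a *: cf lo b x + cf lo b y.
Proof.
rewrite /cf; case: ifP => _; last by rewrite scaler0 addr0.
by rewrite itD itZ scalerDr !scalerA mulrC.
Qed.
Lemma cf0 lo b : cf lo b 0 = 0.
Proof. by rewrite /cf it0 scaler0 if_same. Qed.
Lemma cfZ lo b a x : cf lo b (a *: x) = a *: cf lo b x.
Proof. by have := cf_lin lo b a x 0; rewrite !addr0 cf0 addr0. Qed.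
Lemma cfD lo b x y : cf lo b (x + y) = cf lo b x + cf lo b y.
Proof. by have := cf_lin lo b 1 x y; rewrite !scale1r. Qed.
Lemma cf_sum lo b I (r : seq I) (F : I -> V) : cf lo b (\sum_(x <- r) F x) = \sum_(x <- r) cf lo b (F x).
Proof. exact: (big_morph _ (cfD lo b) (cf0 lo b)). Qed.
Lemma cfA lo b d x : x \in A d -> cf lo b x \in A d.
Proof. by move=> h; rewrite /cf; case: ifP => _; [apply: AZ; apply: iterA | apply: A0]. Qed.

Lemma ml_pat n b : (1 <= n)%N -> size b = n -> multilinear n (fun s => mu n (pat b s)).
Proof.
move=> hn hb s p a x y hs hp /=.
rewrite !pat_set_nth ?hb ?hs //.
have hps : size (pat b s) = n by rewrite size_pat hb hs minnn.
case: ifP => _; first exact: (Hml hn).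
by rewrite N_lin (Hml hn).
Qed.

Lemma ml_cf n lo b (F : seq V -> V) : multilinear n F -> multilinear n (fun s => cf lo b (F s)).
Proof. by move=> h s p a x y hs hp /=; rewrite h // cf_lin. Qed.

Lemma ml_sum n (I : eqType) (r : seq I) (F : I -> seq V -> V) :
  (forall c, c \in r -> multilinear n (F c)) -> multilinear n (fun s => \sum_(c <- r) F c s).
Proof.
move=> h s p a x y hs hp /=.
rewrite scaler_sumr -big_split /=; apply: eq_big_seq => c hc.
by rewrite h.
Qed.

Lemma ml_ext n (F G : seq V -> V) : multilinear n F -> (forall s, size s = n -> G s = F s) -> multilinear n G.
Proof.
move=> h e s p a x y hs hp; rewrite !e ?h // size_set_nth hs; lia.
Qed.

Lemma hd_pat n b : (1 <= n)%N -> size b = n -> has_degree A n (n%:Z - 2) (fun s => mu n (pat b s)).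
Proof.
move=> hn hb s ds hs hom /=; apply: (Hdeg hn).
  by rewrite size_pat hb hs minnn.
by apply: homog_pat => //; [exact: NA | rewrite hb hs].
Qed.

Lemma hd_cf n e lo b (F : seq V -> V) : has_degree A n e F -> has_degree A n e (fun s => cf lo b (F s)).
Proof. by move=> h s ds hs hom /=; apply: cfA; apply: h. Qed.

Lemma hd_sum n e (I : eqType) (r : seq I) (F : I -> seq V -> V) :
  (forall c, c \in r -> has_degree A n e (F c)) -> has_degree A n e (fun s => \sum_(c <- r) F c s).
Proof. by move=> h s ds hs hom /=; apply: Asum => c hc; apply: h. Qed.

Lemma hd_ext n e (F G : seq V -> V) : has_degree A n e F -> (forall s, size s = n -> G s = F s) -> has_degree A n e G.
Proof. by move=> h E s ds hs hom; rewrite E //; apply: h. Qed.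

Lemma ml_muN n : (1 <= n)%N -> multilinear n (muN N mu n).
Proof.
move=> hn; apply: (ml_ext (F := fun s => \sum_(b <- allpat n) cf 1 b (mu n (pat b s)))).
  apply: ml_sum => b hb; apply: ml_cf; apply: ml_pat => //; exact: allpat_size.
by move=> s hs; rewrite muN_pat.
Qed.

Lemma hd_muN n : (1 <= n)%N -> has_degree A n (n%:Z - 2) (muN N mu n).
Proof.
move=> hn; apply: (hd_ext (F := fun s => \sum_(b <- allpat n) cf 1 b (mu n (pat b s)))).
  apply: hd_sum => b hb; apply: hd_cf; apply: hd_pat => //; exact: allpat_size.
by move=> s hs; rewrite muN_pat.
Qed.

Lemma Ainf_rel k s ds : (1 <= k)%N -> size s = k -> homog A s ds ->
  \sum_(1 <= n < k.+1) \sum_(1 <= i < (k.+1 - n).+1)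
     sgn K ((i * n.+1)%N%:Z + n%:Z * dsum ds i.-1) *:
     mu (k.+1 - n)%N (ins s i n (mu n (mid s i n))) = 0.
Proof. by case: HA => _ _ h; apply: h. Qed.

Lemma muN_rel k s ds : (1 <= k)%N -> size s = k -> homog A s ds ->
  \sum_(1 <= n < k.+1) \sum_(1 <= i < (k.+1 - n).+1)
     sgn K ((i * n.+1)%N%:Z + n%:Z * dsum ds i.-1) *:
     muN N mu (k.+1 - n)%N (ins s i n (muN N mu n (mid s i n))) = 0.
Proof.
move=> hk hs hom.
transitivity (\sum_(1 <= n < k.+1) \sum_(b <- allpat k) \sum_(1 <= i < (k.+1 - n).+1)
   cf 1 b (sgn K ((i * n.+1)%N%:Z + n%:Z * dsum ds i.-1) *:
     mu (k.+1 - n) (ins (pat b s) i n (mu n (mid (pat b s) i n))))).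
  apply: eq_big_nat => n /andP[hn1 hn2]; rewrite exchange_big /=.
  apply: eq_big_nat => i /andP[hi1 hi2].
  rewrite (shape hs hom) //; last by lia.
  by rewrite scaler_sumr; apply: eq_bigr => b _; rewrite cfZ.
rewrite exchange_big /= big1_seq // => b /andP[_ hb].
have hpb : size (pat b s) = k by rewrite size_pat (allpat_size hb) hs minnn.
have hompb : homog A (pat b s) ds.
  by apply: homog_pat => //; [exact: NA | rewrite (allpat_size hb) hs].
have := Ainf_rel hk hpb hompb; move/(congr1 (cf 1 b)); rewrite cf0 cf_sum => E; apply: (etrans _ E).
by apply: eq_bigr => n _; rewrite cf_sum.
Qed.

Lemma Ainf_muN : Ainf A (muN N mu).
Proof.
split; [exact: ml_muN | exact: hd_muN | ].
move=> k s ds hk hs hom; exact: muN_rel hk hs hom.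
Qed.

Section Slots.
Variables (m : nat) (F : seq V -> V).
Hypothesis HF : multilinear m F.

Lemma mslot_lin l1 l3 a x y : size (l1 ++ x :: l3) = m ->
  F (l1 ++ (a *: x + y) :: l3) = a *: F (l1 ++ x :: l3) + F (l1 ++ y :: l3).
Proof.
move=> hs; have := HF (s := l1 ++ 0 :: l3) (i := size l1) a x y.
rewrite !set_nth_catz; apply; first by rewrite -hs !size_cat.
by rewrite -hs size_cat /=; lia.
Qed.

Lemma mslot0 l1 l3 : size (l1 ++ 0 :: l3) = m -> F (l1 ++ 0 :: l3) = 0.
Proof.
move=> hs; have := mslot_lin 1 0 hs; rewrite !scale1r addr0 => h.
by apply: (addrI (F (l1 ++ 0 :: l3))); rewrite addr0 -h.
Qed.

Lemma mslotD l1 l3 x y : size (l1 ++ x :: l3) = m ->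
  F (l1 ++ (x + y) :: l3) = F (l1 ++ x :: l3) + F (l1 ++ y :: l3).
Proof. by move=> hs; have := mslot_lin 1 y hs; rewrite !scale1r. Qed.

Lemma mslot_sum l1 l3 (r : seq nat) (G : nat -> V) : size (l1 ++ 0 :: l3) = m ->
  F (l1 ++ (\sum_(b <- r) G b) :: l3) = \sum_(b <- r) F (l1 ++ G b :: l3).
Proof.
move=> hs; elim: r => [|c r IH]; first by rewrite !big_nil mslot0.
rewrite !big_cons mslotD ?IH //.
by rewrite -hs !size_cat.
Qed.
End Slots.

Lemma mid_pat b s i n : size b = size s -> (i.-1 + n <= size s)%N ->
  mid (pat b s) i n = pat (take n (drop i.-1 b)) (mid s i n).
Proof.
move=> hb hk; apply: (@eq_from_nth _ 0).
  rewrite size_pat size_take size_drop !size_mid ?size_pat ?hb ?minnn //; case: ltnP => ?; lia.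
move=> p; rewrite size_mid ?size_pat ?hb ?minnn // => hp.
rewrite nth_mid //.
rewrite [LHS]nth_pat ?hb; try lia.
rewrite [RHS]nth_pat ?size_mid ?size_take ?size_drop ?hb //; try (case: (ltnP n (size s - i.-1)) => _; lia).
by rewrite nth_take // nth_drop nth_mid.
Qed.

Lemma pat_ins_gen s i n y b b' (c : bool) :
  size b = size s -> (1 <= i)%N -> (i.-1 + n <= size s)%N -> size b' = (size s - n).+1 ->
  (forall p, (p < i.-1)%N -> nth false b' p = nth false b p) ->
  (forall p, (i.-1 < p < size b')%N -> nth false b' p = nth false b (p + n - 1)) ->
  nth false b' i.-1 = c ->
  pat b' (ins s i n y) = ins (pat b s) i n (if c then y else N y).
Proof.
move=> hb hi hk hb' h1 h2 h3; apply: (@eq_from_nth _ 0).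
  by rewrite size_pat size_ins // size_ins ?size_pat ?hb ?minnn // hb' minnn.
move=> p; rewrite size_pat size_ins // hb' minnn => hp.
rewrite nth_pat ?hb' ?size_ins // nth_ins // nth_ins ?size_pat ?hb ?minnn //.
case: ltnP => hp1.
  by rewrite h1 // nth_pat ?hb //; lia.
case: eqP => hp2.
  by rewrite hp2 h3.
rewrite h2; last by rewrite hb'; lia.
by rewrite nth_pat ?hb //; lia.
Qed.

Lemma tk_ev_out k r i n : (1 <= r <= k)%N -> (i.-1 + n <= k)%N ->
  (r.-1 < i.-1)%N || (i.-1 + n <= r.-1)%N ->
  take n (drop i.-1 (ev k r)) = nseq n false.
Proof.
move=> hr hk ho; apply: (@eq_from_nth _ false).
  rewrite size_take size_drop !size_ev // ?size_nseq; case: ltnP => ?; lia.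
move=> p; rewrite size_take size_drop size_ev // => hp.
have hp' : (p < n)%N by move: hp; case: (ltnP n (k - i.-1)) => ?; lia.
rewrite nth_take // nth_drop nth_ev // nth_nseq hp'.
apply/negbTE/negP => /andP[/eqP e _]; lia.
Qed.

Lemma tk_ev_in k r i n : (1 <= r <= k)%N -> (1 <= i)%N -> (i.-1 + n <= k)%N ->
  (i.-1 <= r.-1 < i.-1 + n)%N ->
  take n (drop i.-1 (ev k r)) = ev n (r - i + 1).
Proof.
move=> hr hi hk ho; apply: (@eq_from_nth _ false).
  rewrite size_take size_drop !size_ev //; try lia; case: ltnP => ?; lia.
move=> p; rewrite size_take size_drop size_ev // => hp.
have hp' : (p < n)%N by move: hp; case: (ltnP n (k - i.-1)) => ?; lia.
rewrite nth_take // nth_drop !nth_ev //; try lia.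
all: apply/idP/idP => /andP[/eqP e _]; apply/andP; split; try apply/eqP; lia.
Qed.

Lemma size_ins_eq k (s : seq V) i n y : size s = k -> (i.-1 + n <= k)%N -> size (ins s i n y) = (k.+1 - n)%N.
Proof. by move=> hs hk; rewrite size_ins hs //; lia. Qed.

Lemma compi_small k n i r s ds : (1 <= n <= k)%N -> (1 <= i <= k.+1 - n)%N -> (1 <= r <= k)%N ->
  size s = k -> homog A s ds ->
  compi (etaN N mu) (k.+1 - n) n i r s ds =
  sgn K (n%:Z * dsum ds i.-1) *:
    mu (k.+1 - n) (ins (pat (ev k r) s) i n (mu n (mid (pat (ev k r) s) i n))).
Proof.
move=> /andP[hn1 hn2] /andP[hi1 hi2] /andP[hr1 hr2] hs hom.
set m := (k.+1 - n)%N.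
have hk : (i.-1 + n <= k)%N by rewrite /m in hi2; lia.
have hsm : size (mid s i n) = n by rewrite size_mid ?hs.
have homsm := homog_mid i n hom.
have hevs : size (ev k r) = size s by rewrite size_ev ?hs ?hr1.
have hmid : mid (pat (ev k r) s) i n = pat (take n (drop i.-1 (ev k r))) (mid s i n).
  by rewrite mid_pat // hs.
rewrite /compi /=; congr (_ *: _).
rewrite gstar_muN //.
have hnidx : forall j, (1 <= j <= m)%N -> (1 <= j <= nidx m)%N.
  by move=> j hj; rewrite /nidx; case: eqP => ?; lia.
have hins : forall y, size (ins s i n y) = m by move=> y; rewrite (size_ins_eq (k := k)).
case: ifP => h1.
  rewrite /gv hnidx; last by lia.
  rewrite etaN_small //; try lia.
  rewrite hmid tk_ev_out; try lia.
  rewrite pat_nseq // -(N_muN HNij hn1 hsm homsm); congr (mu m _).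
  apply: (@pat_ins_gen _ _ _ _ _ _ false); rewrite ?hs ?size_ev //; try lia;
  try (move=> p hp); rewrite ?nth_ev; lia.
case: ifP => h2.
  rewrite /gv hnidx; last by lia.
  have -> : (1 <= r - i + 1 <= nidx n)%N by rewrite /nidx; case: eqP => ?; lia.
  rewrite etaN_small //; try lia.
  rewrite etaN_small //; try lia.
  rewrite hmid tk_ev_in; try lia.
  congr (mu m _).
  apply: (@pat_ins_gen _ _ _ _ _ _ true); rewrite ?hs ?size_ev //; try lia;
  try (move=> p hp); rewrite ?nth_ev; lia.
case: ifP => h3; last by exfalso; move/negbT: h3; rewrite -ltnNge; rewrite /m; lia.
rewrite /gv hnidx; last by lia.
rewrite etaN_small //; try lia.
rewrite hmid tk_ev_out; try lia.
rewrite pat_nseq // -(N_muN HNij hn1 hsm homsm); congr (mu m _).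
apply: (@pat_ins_gen _ _ _ _ _ _ false); rewrite ?hs ?size_ev //; try lia;
try (move=> p hp); rewrite ?nth_ev; lia.
Qed.

Lemma NS_small k r s ds : (1 <= k)%N -> (1 <= r <= k)%N -> size s = k -> homog A s ds ->
  \sum_(1 <= n < k.+1) \sum_(1 <= i < (k.+1 - n).+1)
     sgn K ((i * n.+1)%N%:Z) *: compi (etaN N mu) (k.+1 - n) n i r s ds = 0.
Proof.
move=> hk hr hs hom.
have hs' : size (pat (ev k r) s) = k by rewrite size_pat size_ev ?hs ?minnn.
have hom' : homog A (pat (ev k r) s) ds.
  by apply: homog_pat => //; [exact: NA | rewrite size_ev ?hs].
apply: (etrans _ (Ainf_rel hk hs' hom')); apply: eq_big_nat => n hn; apply: eq_big_nat => i hi.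
rewrite compi_small //; try lia.
by rewrite scalerA -sgnD.
Qed.

Lemma gv_sum (eta : nat -> nat -> seq V -> V) n x :
  \sum_(1 <= r < n.+2) gv eta n r x = gstar eta n x.
Proof.
rewrite /gstar /nidx; case: eqP => [->|hn].
  rewrite big_nat_recr //= big_nat1 /gv /nidx /= addr0.
  by rewrite big_nat1.
apply: eq_big_nat => r hr; rewrite /gv /nidx; case: eqP => // _.
by rewrite hr.
Qed.

Lemma compi_sum (eta : nat -> nat -> seq V -> V) m n i s ds : (1 <= n)%N -> (1 <= i <= m)%N ->
  multilinear m (eta m i) -> size s = (m + n).-1 ->
  \sum_(1 <= r < (m + n).+1) compi eta m n i r s ds =
  sgn K (n%:Z * dsum ds i.-1) *: gstar eta m (ins s i n (gstar eta n (mid s i n))).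
Proof.
move=> hn /andP[hi1 hi2] hml hs.
rewrite /compi /= -scaler_sumr; congr (_ *: _).
set X := ins s i n (gstar eta n (mid s i n)).
have hk : (i.-1 + n <= size s)%N by rewrite hs; lia.
have fi : forall x, gv eta m i x = eta m i x.
  by move=> x; rewrite /gv /nidx; case: eqP => ? ; rewrite ifT //; lia.
rewrite (@big_cat_nat _ _ _ i 1 (m + n).+1) //=; last by lia.
rewrite (@big_cat_nat _ _ _ (i + n) i (m + n).+1) //=; try lia.
rewrite (@big_nat_recr _ _ _ (m + n) (i + n)) /=; last by lia.
have S1 : \sum_(1 <= r < i) (if (r <= i.-1)%N then gv eta m r X
        else if (r <= i + n - 1)%N then gv eta m i (ins s i n (gv eta n (r - i + 1) (mid s i n)))
        else if (r <= m + n - 1)%N then gv eta m (r - n + 1) X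
        else if r == (m + n)%N then gv eta m i (ins s i n (gv eta n n.+1 (mid s i n))) + gv eta m m.+1 X
        else 0) = \sum_(1 <= r < i) gv eta m r X.
  by apply: eq_big_nat => r hr; rewrite ifT //; lia.
have S2 : \sum_(i <= r < i + n) (if (r <= i.-1)%N then gv eta m r X
        else if (r <= i + n - 1)%N then gv eta m i (ins s i n (gv eta n (r - i + 1) (mid s i n)))
        else if (r <= m + n - 1)%N then gv eta m (r - n + 1) X
        else if r == (m + n)%N then gv eta m i (ins s i n (gv eta n n.+1 (mid s i n))) + gv eta m m.+1 X
        else 0) = eta m i (ins s i n (\sum_(1 <= r < n.+1) gv eta n r (mid s i n))).
  rewrite /ins (mslot_sum hml); last by rewrite size_cat /= size_take size_drop; case: ltnP => ?; lia.
  rewrite -{1}[i]add0n big_addn.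
  have -> : (i + n - i = n)%N by lia.
  rewrite [RHS]big_add1 /=.
  apply: eq_big_nat => r hr; rewrite ifF; last by lia.
  rewrite ifT; last by lia.
  by rewrite fi; congr (eta m i (_ ++ gv eta n _ _ :: _)); lia.
have S3 : \sum_(i + n <= r < m + n) (if (r <= i.-1)%N then gv eta m r X
        else if (r <= i + n - 1)%N then gv eta m i (ins s i n (gv eta n (r - i + 1) (mid s i n)))
        else if (r <= m + n - 1)%N then gv eta m (r - n + 1) X
        else if r == (m + n)%N then gv eta m i (ins s i n (gv eta n n.+1 (mid s i n))) + gv eta m m.+1 X
        else 0) = \sum_(i.+1 <= r < m.+1) gv eta m r X.
  have -> : (i + n = i.+1 + n.-1)%N by lia.
  rewrite big_addn.
  have -> : (m + n - n.-1 = m.+1)%N by lia.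
  apply: eq_big_nat => r hr; rewrite ifF; last by lia.
  rewrite ifF; last by lia.
  rewrite ifT; last by lia.
  by congr (gv eta m _ X); lia.
rewrite S1 S2 S3; clear S1 S2 S3.
rewrite ifF; last by lia.
rewrite ifF; last by lia.
rewrite ifF; last by lia.
rewrite eqxx.
rewrite -gv_sum (@big_nat_recr _ _ _ m.+1 1) /=; last by lia.
rewrite (@big_cat_nat _ _ _ i 1 m.+1) //=; try lia.
rewrite (@big_ltn _ _ _ i m.+1) ?ltnS //.
have -> : gv eta m i X = eta m i (ins s i n (\sum_(1 <= r < n.+1) gv eta n r (mid s i n))) +
    gv eta m i (ins s i n (gv eta n n.+1 (mid s i n))).
  rewrite !fi /ins -(mslotD hml); last by rewrite size_cat /= size_take size_drop; case: ltnP => ?; lia.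
  by rewrite -big_nat_recr //= gv_sum.
rewrite !addrA; congr (_ + _); rewrite -!addrA; congr (_ + (_ + _)); exact: addrC.
Qed.

Lemma etaN_cases n r : (1 <= n)%N -> (1 <= r <= nidx n)%N ->
  (1 <= r <= n)%N \/ ((2 <= n)%N /\ r = n.+1).
Proof. by rewrite /nidx; case: eqP => ? h1 h2; lia. Qed.

Lemma ml_etaN n r : (1 <= n)%N -> (1 <= r <= nidx n)%N -> multilinear n (etaN N mu n r).
Proof.
move=> hn hr; case: (etaN_cases hn hr) => [h|[h ->]].
  apply: (ml_ext (F := fun s => mu n (pat (ev n r) s))); first by apply: ml_pat => //; rewrite size_ev.
  by move=> s hs; rewrite etaN_small.
apply: (ml_ext (F := fun s => \sum_(b <- allpat n) cf 2 b (mu n (pat b s)))).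
  apply: ml_sum => b hb; apply: ml_cf; apply: ml_pat => //; exact: allpat_size.
by move=> s hs; rewrite etaN_top.
Qed.

Lemma hd_etaN n r : (1 <= n)%N -> (1 <= r <= nidx n)%N -> has_degree A n (n%:Z - 2) (etaN N mu n r).
Proof.
move=> hn hr; case: (etaN_cases hn hr) => [h|[h ->]].
  apply: (hd_ext (F := fun s => mu n (pat (ev n r) s))); first by apply: hd_pat => //; rewrite size_ev.
  by move=> s hs; rewrite etaN_small.
apply: (hd_ext (F := fun s => \sum_(b <- allpat n) cf 2 b (mu n (pat b s)))).
  apply: hd_sum => b hb; apply: hd_cf; apply: hd_pat => //; exact: allpat_size.
by move=> s hs; rewrite etaN_top.
Qed.

Lemma NS_top k s ds : (2 <= k)%N -> size s = k -> homog A s ds ->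
  \sum_(1 <= n < k.+1) \sum_(1 <= i < (k.+1 - n).+1)
     sgn K ((i * n.+1)%N%:Z) *: compi (etaN N mu) (k.+1 - n) n i k.+1 s ds = 0.
Proof.
move=> hk hs hom.
set R := fun r => \sum_(1 <= n < k.+1) \sum_(1 <= i < (k.+1 - n).+1)
     sgn K ((i * n.+1)%N%:Z) *: compi (etaN N mu) (k.+1 - n) n i r s ds.
have Z : \sum_(1 <= r < k.+1) R r = 0.
  rewrite big_nat_cond big1 // => r /andP[hr _]; apply: NS_small => //; lia.
have T : \sum_(1 <= r < k.+2) R r = 0.
  rewrite /R exchange_big /=.
  apply: (etrans _ (muN_rel (k := k) _ hs hom)); last by lia.
  apply: eq_big_nat => n hn; rewrite exchange_big /=; apply: eq_big_nat => i hi.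
  rewrite -scaler_sumr.
  have -> : k.+2 = ((k.+1 - n) + n).+1 by lia.
  rewrite compi_sum; try lia.
  - rewrite scalerA -sgnD !gstar_muN //; try lia;
    rewrite ?size_mid ?(size_ins_eq (k := k)) ?hs //; lia.
  - by apply: ml_etaN; [lia | rewrite /nidx; case: ifP => /eqP ?; lia].
by move: T; rewrite big_nat_recr //= Z add0r.
Qed.

Lemma NSinf_etaN : NSinf A (etaN N mu).
Proof.
split; [exact: ml_etaN | exact: hd_etaN | ].
move=> k r s ds hk hr hs hom.
case: (etaN_cases hk hr) => [h|[h ->]]; first exact: NS_small.
exact: NS_top.
Qed.

End All.

Unset Implicit Arguments.

Theorem theorem6p14 (K : fieldType) (V : lmodType K) (A : int -> {pred V})
  (mu : nat -> seq V -> V) (N : V -> V) :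
  [pchar K] =i pred0 ->
  graded A ->
  Ainf A mu ->
  strict_homotopy_Nijenhuis N A mu ->
  NSinf A (etaN N mu) /\ Ainf A (muN N mu).
Proof.
move=> _ Hgr HA HN.
have NL : linear N by case: HN.
have [Hml Hdeg _] := HA.
split.
  by apply: NSinf_etaN.
by apply: Ainf_muN.
Qed.
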